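(* Stable semantics is serialisable with the selection function $\alpha_{adm}(X,Y,Z)=X\cup Y\cup Z$ and the termination function $\beta_{st}(F,S)=1$ if $F=(\emptyset,\emptyset)$ and $\beta_{st}(F,S)=0$ otherwise.
   Context: An abstract argumentation framework (AF) is a pair $F=(A,R)$ with $A$ a finite subset of a fixed universal set of arguments $\mathfrak{A}$ and $R\subseteq A\times A$ ($a\to b$ means $(a,b)\in R$). For $S\subseteq A$: $S^+=\{a\mid \exists b\in S: b\to a\}$, $S^-=\{a\mid\exists b\in S: a\to b\}$; for sets $S,S'$, $S\to S'$ means $S^+\cap S'\neq\emptyset$. $S$ is admissible if it is conflict-free and every attacker of an element of $S$ is attacked by some element of $S$. A stable extension is an admissible set $E$ with $E\cup E^+=A$. An initial set is a non-empty admissible set with no non-empty admissible proper subset; $\mathrm{IS}(F)$ is the set of initial sets. An initial set $S$ is unattacked if $S^-=\emptyset$; unchallenged if $S^-\neq\emptyset$ and no $S'\in\mathrm{IS}(F)$ has $S'\to S$; challenged if some $S'\in\mathrm{IS}(F)$ has $S'\to S$. Write $\mathrm{IS}^{u}(F),\mathrm{IS}^{uc}(F),\mathrm{IS}^{c}(F)$ for these sets. The reduct is $F^S=(A',R\cap(A'\times A'))$ with $A'=A\setminus(S\cup S^+)$. A selection function $\alpha$ maps any three sets $X,Y,Z$ of sets of arguments to a subset of $X\cup Y\cup Z$; a termination function $\beta$ maps pairs $(F,S)$ to $\{0,1\}$. Transitions: $(F,S)\to(F^{S'},S\cup S')$ whenever $S'\in\alpha(\mathrm{IS}^u(F),\mathrm{IS}^{uc}(F),\mathrm{IS}^c(F))$.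 $(F,S)\leadsto^{\alpha,\beta}(F',S')$ means $(F',S')$ is reachable from $(F,S)$ in finitely many (possibly zero) transitions and $\beta(F',S')=1$. $\mathcal{E}^{\alpha,\beta}(F)$ is the set of all $S$ with $(F,\emptyset)\leadsto^{\alpha,\beta}(F',S)$ for some $F'$. A semantics $\sigma$ is serialisable with $\alpha,\beta$ if $\sigma(F)=\mathcal{E}^{\alpha,\beta}(F)$ for all AFs $F$. *)

(* Defs.v *)
From HB Require Import structures.
From mathcomp Require Import all_boot finmap.
From Stdlib Require Import Relations.Relation_Operators.

Set Implicit Arguments.
Unset Strict Implicit.
Unset Printing Implicit Defensive.

Local Open Scope fset_scope.

Section AF.
Variable T : choiceType.

Definition AF := ({fset T} * {fset (T * T)})%type.

Definition args (F : AF) : {fset T} := F.1.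
Definition atts (F : AF) : {fset (T * T)} := F.2.

Definition wf_AF (F : AF) : Prop :=
  forall p, p \in atts F -> (p.1 \in args F) && (p.2 \in args F).

Definition plus (F : AF) (S : {fset T}) : {fset T} :=
  [fset p.2 | p in atts F & p.1 \in S].
Definition minus (F : AF) (S : {fset T}) : {fset T} :=
  [fset p.1 | p in atts F & p.2 \in S].

Definition attacks_set (F : AF) (S S' : {fset T}) : Prop :=
  plus F S `&` S' != fset0.

Definition conflict_free (F : AF) (S : {fset T}) : Prop :=
  S `<=` args F /\
  forall a b, a \in S -> b \in S -> (a, b) \notin atts F.

Definition admissible (F : AF) (S : {fset T}) : Prop :=
  conflict_free F S /\
  forall a b, b \in S -> (a, b) \in atts F -> a \in plus F S.

Definition stable (F : AF) (E : {fset T}) : Prop :=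
  admissible F E /\ E `|` plus F E = args F.

Definition initial (F : AF) (S : {fset T}) : Prop :=
  S != fset0 /\ admissible F S /\
  forall S', S' `<` S -> S' != fset0 -> ~ admissible F S'.

Definition IS_u (F : AF) (S : {fset T}) : Prop :=
  initial F S /\ minus F S = fset0.
Definition IS_uc (F : AF) (S : {fset T}) : Prop :=
  initial F S /\ minus F S != fset0 /\
  ~ (exists S', initial F S' /\ attacks_set F S' S).
Definition IS_c (F : AF) (S : {fset T}) : Prop :=
  initial F S /\ exists S', initial F S' /\ attacks_set F S' S.

Definition reduct (F : AF) (S : {fset T}) : AF :=
  let A' := args F `\` (S `|` plus F S) in
  (A', [fset p in atts F | (p.1 \in A') && (p.2 \in A')]).

Definition setset := {fset T} -> Prop.

Definition selection := setset -> setset -> setset -> setset.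
Definition is_selection (alpha : selection) : Prop :=
  forall X Y Z S, alpha X Y Z S -> X S \/ Y S \/ Z S.

Definition termination := AF -> {fset T} -> bool.

Definition step (alpha : selection) (c c' : AF * {fset T}) : Prop :=
  exists S', alpha (IS_u c.1) (IS_uc c.1) (IS_c c.1) S' /\
             c' = (reduct c.1 S', c.2 `|` S').

Definition reaches (alpha : selection) := clos_refl_trans _ (step alpha).

Definition E_ab (alpha : selection) (beta : termination) (F : AF)
    (S : {fset T}) : Prop :=
  exists F', reaches alpha (F, fset0) (F', S) /\ beta F' S.

Definition semantics := AF -> {fset T} -> Prop.

Definition serialisable (sigma : semantics) (alpha : selection)
    (beta : termination) : Prop :=
  forall F, wf_AF F -> forall S, sigma F S <-> E_ab alpha beta F S.

Definition alpha_adm : selection := fun X Y Z S => X S \/ Y S \/ Z S.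

Definition beta_st : termination := fun F _ => F == (fset0, fset0).

End AF.

(* Main.v *)
Require Import Defs.
From mathcomp Require Import all_boot finmap.
From Stdlib Require Import Classical Relations.Relation_Operators.
Set Implicit Arguments. Unset Strict Implicit.
Local Open Scope fset_scope.
Section S.
Variable T : choiceType.
Implicit Types (F G : AF T) (S E : {fset T}).
Lemma mem_plus F S x : reflect (exists a, a \in S /\ (a, x) \in atts F) (x \in plus F S).
Proof.
apply: (iffP idP).
- case/imfsetP => [[a b]] /=; rewrite !inE /= => /andP [H1 H2] ->; exists a; by [].
- case=> a [H1 H2]; apply/imfsetP; exists (a, x) => //=; rewrite !inE /= H1 andbT; exact H2.
Qed.

Definition inv F (c : AF T * {fset T}) :=
  admissible F c.2 /\
  (forall x, (x \in args c.1) = [&& x \in args F, x \notin c.2 & x \notin plus F c.2]) /\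
  (forall p, (p \in atts c.1) = [&& p \in atts F, p.1 \in args c.1 & p.2 \in args c.1]).

Lemma inv0 F : wf_AF F -> inv F (F, fset0).
Proof.
move=> wf; rewrite /inv /admissible /conflict_free /=.
split; [split; [split|]|split].
- exact: fsub0set.
- by move=> a b; rewrite inE.
- by move=> a b; rewrite inE.
- move=> x /=; case: (x \in args F) => //=.
  by apply/esym/negP => /mem_plus [a []]; rewrite inE.
- move=> p /=; case H: (p \in atts F) => //=; by rewrite (wf _ H).
Qed.

Lemma initial_adm G S : initial G S -> admissible G S.
Proof. by case=> _ []. Qed.

Lemma inv_step F c c' : wf_AF F -> step (@alpha_adm T) c c' -> inv F c -> inv F c'.
Proof.
move=> wf [S' [Ha ->]]; case: c Ha => G E /= Ha [[[EA Ecf] Edef] [HA HR]] /=.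
have Hi : initial G S' by case: Ha => [[]|[[]|[]]].
case: (initial_adm Hi) => [[S'G S'cf] S'def].
have S'A x : x \in S' -> x \in args G by move/(fsubsetP S'G).
have plusE x : x \in args G -> (x \in plus F S') = (x \in plus G S').
  move=> xG; apply/mem_plus/mem_plus => -[a [aS ax]]; exists a; split => //.
  - by rewrite HR ax /= xG S'A.
  - by move: ax; rewrite HR => /andP [].
have HA' x : (x \in args (reduct G S')) = [&& x \in args F, x \notin E `|` S' & x \notin plus F (E `|` S')].
  rewrite /reduct /args /= in_fsetD in_fsetU negb_or.
  have -> : x \in G.1 = (x \in args G) by [].
  rewrite HA.
  case xF: (x \in args F) => //=; last by rewrite andbF.
  have xpE: (x \in plus F (E `|` S')) = (x \in plus F E) || (x \in plus F S').
    apply/mem_plus/orP.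
    - by case=> a [/fsetUP [] aS ax]; [left|right]; apply/mem_plus; exists a.
    - by case=> /mem_plus [a [aS ax]]; exists a; rewrite in_fsetU aS ?orbT.
  rewrite in_fsetU negb_or xpE negb_or.
  case xE: (x \in E); case xpF: (x \in plus F E); rewrite /= ?andbF //.
  have xG : x \in args G by rewrite HA xF xE xpF.
  by rewrite plusE // andbT.
split; [|split].
- split; [split|].
  + apply/fsubsetP => x /fsetUP [xE|xS]; first exact: (fsubsetP EA).
    by move: (S'A x xS); rewrite HA => /andP [].
  + move=> a b /fsetUP [aE|aS] /fsetUP [bE|bS].
    * exact: Ecf.
    * apply/negP => ab; move: (S'A b bS); rewrite HA => /and3P [_ _ /negP]; apply.
      by apply/mem_plus; exists a.
    * apply/negP => ab; move: (Edef a b bE ab) => apE.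
      by move: (S'A a aS); rewrite HA apE !andbF.
    * apply/negP => ab; move: (S'cf a b aS bS) => /negP; apply.
      by rewrite HR ab /= !S'A.
  + move=> a b /fsetUP [bE|bS] ab.
    * move: (Edef a b bE ab) => /mem_plus [c [cE ca]].
      by apply/mem_plus; exists c; rewrite in_fsetU cE.
    * have aF : a \in args F by case/andP: (wf _ ab).
      case apE: (a \in plus F E).
        move: apE => /mem_plus [c [cE ca]].
        by apply/mem_plus; exists c; rewrite in_fsetU cE.
      case aE: (a \in E).
        by move: (S'A b bS); rewrite HA => /and3P [_ _ /negP []]; apply/mem_plus; exists a.
      have aG : a \in args G by rewrite HA aF aE apE.
      have abG : (a, b) \in atts G by rewrite HR ab /= aG S'A.
      move: (S'def a b bS abG) => /mem_plus [c [cS ca]].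
      by apply/mem_plus; exists c; rewrite in_fsetU cS orbT; move: ca; rewrite HR => /andP [].
- exact: HA'.
- move=> p /=; rewrite /reduct /atts /= !inE /=.
  have -> : p \in G.2 = (p \in atts G) by [].
  rewrite HR /atts /args /=.
  by case: (p \in F.2); case: (p.1 \in G.1); case: (p.2 \in G.1); rewrite /= ?andbF ?andbT.
Qed.

Lemma inv_reach F c c' : wf_AF F -> reaches (@alpha_adm T) c c' -> inv F c -> inv F c'.
Proof.
move=> wf; elim => [x y st|x|x y z _ IH1 _ IH2]; first exact: inv_step; by auto.
Qed.

Lemma bwd F S : wf_AF F -> E_ab (@alpha_adm T) (@beta_st T) F S -> stable F S.
Proof.
move=> wf [F' [r b]].
have [Hadm [HA HR]] := inv_reach wf r (inv0 wf).
move: b; rewrite /beta_st => /eqP eF; subst F'.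
split => //=.
apply/fsetP => x; rewrite in_fsetU; apply/idP/idP.
- case/orP => [xS|/mem_plus [a [_ ax]]].
  + by case: Hadm => [[/fsubsetP H _] _]; apply: H.
  + by case/andP: (wf _ ax).
- move=> xF; move: (HA x) => /=; rewrite inE xF /=.
  by case: (x \in S) => //=; case: (x \in plus F S).
Qed.

Lemma min_init G : forall n (X : {fset T}), (#|`X| <= n)%N -> X != fset0 -> admissible G X ->
  exists S', S' `<=` X /\ initial G S'.
Proof.
elim => [|n IH] X.
- by rewrite leqn0 cardfs_eq0 => ->.
- move=> cX X0 aX.
  case: (classic (exists S', S' `<` X /\ S' != fset0 /\ admissible G S')).
  + case=> S' [pS [S'0 aS]].
    have cS : (#|`S'| <= n)%N.
      by rewrite -ltnS; exact: leq_trans (fproper_ltn_card pS) cX.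
    case: (IH S' cS S'0 aS) => S'' [s1 s2]; exists S''; split => //.
    by apply: fsubset_trans s1 _; move: pS; rewrite fproperE => /andP [].
  + move=> H; exists X; split => //; split => //; split => // S' h1 h2 h3.
    by apply: H; exists S'.
Qed.


Lemma fwd F S : wf_AF F -> stable F S -> forall n G E, (#|`args G| <= n)%N ->
  inv F (G, E) -> E `<=` S -> reaches (@alpha_adm T) (G, E) ((fset0, fset0), S).
Proof.
move=> wf [[[SA Scf] Sdef] Sst].
elim => [|n IH] G E cG Hinv ES; move: (Hinv) => [[[EA Ecf] Edef] [HA HR]]; rewrite /= in EA Ecf Edef HA HR.
all: have SG x : x \in S -> x \notin E -> x \in args G.
all: try (move=> xS xE; rewrite HA xE (fsubsetP SA _ xS) /=;
     apply/negP => /mem_plus [a [aE ax]];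
     by move: (Scf a x (fsubsetP ES _ aE) xS); rewrite ax).
all: have [G0|GN] := eqVneq (args G) fset0.
1,3: have RG : atts G = fset0 by
    apply/fsetP => p; rewrite HR G0 !inE /=; rewrite ?andbF.
1,2: have EqS : E = S by
    apply/fsetP => x; apply/idP/idP; [exact: (fsubsetP ES)|
    move=> xS; case xE: (x \in E) => //; move: (SG x xS); rewrite xE G0 inE; by apply].
1,2: by subst E; case: G G0 RG {cG HA HR SG Hinv} => A R /= -> ->; exact: rt_refl.
  by move: cG GN; rewrite leqn0 cardfs_eq0 => ->.
have SGsub : S `\` E `<=` args G.
  by apply/fsubsetP => x; rewrite in_fsetD => /andP [xE xS]; apply: SG.
have aSG : admissible G (S `\` E).
  split; [split|] => //.
  - move=> a b; rewrite !in_fsetD => /andP [_ aS] /andP [_ bS]; rewrite HR.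
    by apply/negP => /andP [ab _]; move: (Scf a b aS bS); rewrite ab.
  - move=> a b; rewrite in_fsetD => /andP [bE bS]; rewrite HR => /and3P [ab aG _].
    case/mem_plus: (Sdef a b bS ab) => c [cS ca].
    have cE : c \notin E.
      apply/negP => cE; move: aG; rewrite HA => /and3P [_ _ /negP]; apply.
      by apply/mem_plus; exists c.
    apply/mem_plus; exists c; split; first by rewrite in_fsetD cE.
    by rewrite HR ca aG SG.
have SGN : S `\` E != fset0.
  case/fset0Pn: GN => x xG.
  have xF : x \in args F by move: xG; rewrite HA => /andP [].
  move: xF; rewrite -Sst in_fsetU => /orP [xS|/mem_plus [c [cS cx]]].
  - apply/fset0Pn; exists x; rewrite in_fsetD xS andbT.
    by move: xG; rewrite HA => /and3P [].
  - apply/fset0Pn; exists c; rewrite in_fsetD cS andbT.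
    apply/negP => cE; move: xG; rewrite HA => /and3P [_ _ /negP]; apply.
    by apply/mem_plus; exists c.
case: (min_init (leqnn _) SGN aSG) => S' [S'sub S'init].
have st : step (@alpha_adm T) (G, E) (reduct G S', E `|` S').
  exists S'; split => //=; rewrite /alpha_adm.
  case: (eqVneq (minus G S') fset0) => m0; first by left.
  right; case: (classic (exists S'', initial G S'' /\ attacks_set G S'' S')) => h.
  - by right.
  - by left.
have inv' := inv_step wf st Hinv.
rewrite /reaches; eapply rt_trans; [apply rt_step; exact st|]; apply: (IH _ _ _ inv').
- rewrite -ltnS; apply: leq_trans cG; apply: fproper_ltn_card.
  rewrite fproperE; apply/andP; split; first by apply: fsubsetDl.
  case: S'init => /fset0Pn [y yS] _.
  apply/negP => /fsubsetP /(_ y) h.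
  have yG : y \in args G by apply: (fsubsetP SGsub); apply: (fsubsetP S'sub).
  by move: (h yG); rewrite /reduct /args /= in_fsetD in_fsetU yS.
- rewrite fsubUset ES /=; apply: fsubset_trans S'sub _; exact: fsubsetDl.
Qed.
End S.
Unset Implicit Arguments.

Theorem theorem5 (T : choiceType) :
  serialisable (@stable T) (@alpha_adm T) (@beta_st T).
Proof.
move=> F wf S; split.
- move=> st; exists (fset0, fset0); split; last by rewrite /beta_st.
  apply: (fwd wf st (leqnn _) (inv0 wf)); exact: fsub0set.
- exact: bwd.
Qed.
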